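(* Let $k$ be a field, $k[x]$ a polynomial ring in one variable, $n\ge1$, $u_i,v_i\in k^*$, and let $p_1(x),\dots,p_n(x)\in k[x]\setminus\{0\}$ all have the same set of prime factors. Let $a_1,\dots,a_n,b_1,\dots,b_n$ be positive integers with $\gcd(a_i,b_1\cdots b_i)=1$ for each $i$, and define $$B_n=k[x][z_0,\dots,z_{n+1}]/\big(p_i(x)z_{i+1}+u_iz_i^{a_i}+v_iz_{i-1}^{b_i}\big)_{1\le i\le n},$$ where $z_0,\dots,z_{n+1}$ are indeterminates. If $p_i(x)\notin k$ and $a_i,b_i\ge2$ for all $i$, then the minimum number of generators of $B_n$ as a $k$-algebra is $n+3$. *)

(* Defs.v *)
From HB Require Import structures.
From mathcomp Require Import all_boot all_order all_algebra.
From mathcomp Require Import mpoly.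
Set Implicit Arguments. Unset Strict Implicit. Unset Printing Implicit Defensive.
Import GRing.Theory.
Local Open Scope ring_scope.

Definition in_ideal (R : comRingType) (m : nat) (r : 'I_m -> R) (f : R) :=
  exists c : 'I_m -> R, f = \sum_(i < m) c i * r i.

(* The quotient k-algebra {mpoly k[N]} / (r_1,...,r_m) is generated as a
   k-algebra by (at most) d elements: there are d elements g_1..g_d of the
   polynomial ring whose classes generate the quotient, i.e. every f is
   congruent modulo the ideal to a k-polynomial expression Q(g_1,...,g_d). *)
Definition quot_alg_generated_by (k : fieldType) (N m : nat)
    (r : 'I_m -> {mpoly k[N]}) (d : nat) :=
  exists g : 'I_d -> {mpoly k[N]},
    forall f : {mpoly k[N]}, exists Q : {mpoly k[d]},
      in_ideal r (f - mmap (@mpolyC N k) g Q).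

Definition quot_embdim_eq (k : fieldType) (N m : nat)
    (r : 'I_m -> {mpoly k[N]}) (d : nat) :=
  quot_alg_generated_by r d /\
  forall d', quot_alg_generated_by r d' -> (d <= d')%N.

(* Polynomial ring k[x][z_0,...,z_{n+1}] = {mpoly k[n+3]}:
   variable 0 is x, variable j+1 is z_j. *)
Definition varx (n : nat) : 'I_(n.+3) := ord0.
Definition varz (n j : nat) : 'I_(n.+3) := inord j.+1.

Definition liftx (k : fieldType) (n : nat) (p : {poly k}) : {mpoly k[n.+3]} :=
  (map_poly (@mpolyC n.+3 k) p).['X_(varx n)].

(* The n relations p_i(x) z_{i+1} + u_i z_i^{a_i} + v_i z_{i-1}^{b_i},
   i = 1..n (the ordinal i : 'I_n stands for index i+1). *)
Definition Brel (k : fieldType) (n : nat) (p : nat -> {poly k}) (u v : nat -> k)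
    (a b : nat -> nat) (i : 'I_n) : {mpoly k[n.+3]} :=
  let j := i.+1 in
  liftx n (p j) * 'X_(varz n j.+1)
  + u j *: 'X_(varz n j) ^+ a j
  + v j *: 'X_(varz n j.-1) ^+ b j.

Definition same_prime_factors (k : fieldType) (p q : {poly k}) :=
  forall f : {poly k}, irreducible_poly f -> (f %| p) = (f %| q).

(* Main.v *)
Require Import Defs.
From HB Require Import structures.
From mathcomp Require Import all_boot all_order all_algebra all_field.
From mathcomp Require Import mpoly.
From mathcomp Require Import ring zify.
From Stdlib Require Import Classical.
Set Implicit Arguments. Unset Strict Implicit. Unset Printing Implicit Defensive.
Import GRing.Theory.
Local Open Scope ring_scope.
Section Der.
Variables (k L : fieldType) (N : nat) (iota : {rmorphism k -> L}) (pt c : 'I_N -> L).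

Definition phi (F : {mpoly k[N]}) : L := mmap iota pt F.
Definition Dc (F : {mpoly k[N]}) : L := \sum_(e < N) c e * phi (F^`M(e)).

Lemma phiD F G : phi (F + G) = phi F + phi G.
Proof. exact: mmapD. Qed.
Lemma phiM F G : phi (F * G) = phi F * phi G.
Proof. exact: rmorphM. Qed.
Lemma phiC a : phi a%:MP = iota a.
Proof. exact: mmapC. Qed.
Lemma phiX i : phi 'X_i = pt i.
Proof. by rewrite /phi mmapX mmap1U. Qed.

Lemma DcD F G : Dc (F + G) = Dc F + Dc G.
Proof. by rewrite /Dc -big_split; apply: eq_bigr => e _; rewrite mderivD phiD mulrDr. Qed.
Lemma DcM F G : Dc (F * G) = phi F * Dc G + phi G * Dc F.
Proof.
rewrite /Dc !mulr_sumr -big_split; apply: eq_bigr => e _.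
rewrite /= mderivM phiD !phiM; ring.
Qed.
Lemma DcC a : Dc a%:MP = 0.
Proof. by rewrite /Dc big1 // => e _; rewrite mderivC /phi mmap0 mulr0. Qed.
Lemma DcX i : Dc 'X_i = c i.
Proof.
rewrite /Dc (bigD1 i) //= big1 ?addr0.
  rewrite mderivX mnm1E eqxx.
  have -> : (U_(i) - U_(i))%MM = 0%MM by apply/mnmP => j; rewrite !mnmE subnn.
  by rewrite mpolyX0 scale1r /phi rmorph1 mulr1.
move=> j ji; rewrite mderivX mnm1E eq_sym (negbTE ji) scale0r /phi mmap0 mulr0 //.
Qed.

Lemma phiZ a F : phi (a *: F) = iota a * phi F.
Proof. by rewrite -mul_mpolyC phiM phiC. Qed.
Lemma DcZ a F : Dc (a *: F) = iota a * Dc F.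
Proof. by rewrite -mul_mpolyC DcM DcC mulr0 addr0 phiC. Qed.
Lemma Dc0 : Dc 0 = 0.
Proof. by rewrite -(mpolyC0 N k) DcC. Qed.
Lemma Dc1 : Dc 1 = 0.
Proof. by rewrite -(mpolyC1 N k) DcC. Qed.

Lemma Dc_pow Z m : phi Z = 0 -> (2 <= m)%N -> Dc (Z ^+ m) = 0.
Proof.
move=> hZ; case: m => // m hm; rewrite exprS DcM hZ mul0r add0r.
have -> : phi (Z ^+ m) = 0; last by rewrite mul0r.
by rewrite (rmorphXn (mmap iota pt) m Z : phi (Z ^+ m) = phi Z ^+ m) hZ expr0n; case: m hm.
Qed.
Lemma phi_pow Z m : phi Z = 0 -> (1 <= m)%N -> phi (Z ^+ m) = 0.
Proof. by move=> hZ; rewrite (rmorphXn (mmap iota pt) m Z : phi (Z ^+ m) = phi Z ^+ m) hZ expr0n; case: m. Qed.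

Lemma Dc_mmap d (g : 'I_d -> {mpoly k[N]}) (Q : {mpoly k[d]}) :
  (forall j, Dc (g j) = 0) -> Dc (mmap (@mpolyC N k) g Q) = 0.
Proof.
move=> hg; rewrite /mmap; apply: (big_ind (fun F => Dc F = 0)) => //.
- exact: Dc0.
- by move=> x y hx hy; rewrite DcD hx hy addr0.
move=> m _; rewrite DcM DcC.
have -> : Dc (mmap1 g m) = 0; last by rewrite !mulr0 addr0.
rewrite /mmap1.
apply: (big_ind (fun F => Dc F = 0)) => //.
- exact: Dc1.
- by move=> x y hx hy; rewrite DcM hx hy !mulr0 addr0.
move=> i _; elim: (m i) => [|t IH]; first by rewrite expr0 Dc1.
by rewrite exprS DcM IH hg !mulr0 addr0.
Qed.

Lemma Dc_ideal m (r : 'I_m -> {mpoly k[N]}) F :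
  (forall i, phi (r i) = 0) -> (forall i, Dc (r i) = 0) -> in_ideal r F -> Dc F = 0.
Proof.
move=> h1 h2 [cc ->]; apply: (big_ind (fun F => Dc F = 0)) => //.
- exact: Dc0.
- by move=> x y hx hy; rewrite DcD hx hy addr0.
by move=> i _; rewrite DcM h1 h2 mulr0 mul0r addr0.
Qed.
Lemma phi_liftP (P : {poly k}) x :
  phi ((map_poly (@mpolyC N k) P).[x]) = (map_poly iota P).[phi x].
Proof.
have -> : phi ((map_poly (@mpolyC N k) P).[x]) =
   (map_poly phi (map_poly (@mpolyC N k) P)).[phi x] :=
   esym (horner_map (mmap iota pt) _ x).
rewrite -map_poly_comp_id0; last by rewrite /phi mmap0.
congr (_.[_]); apply: eq_map_poly => y /=; exact: phiC.
Qed.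
Lemma DcN F : Dc (- F) = - Dc F.
Proof. by rewrite -scaleN1r DcZ rmorphN1 mulN1r. Qed.
End Der.
Lemma exists_kernel (L : fieldType) N d (A : 'M[L]_(N,d)) :
  (d < N)%N -> exists c : 'rV[L]_N, c != 0 /\ c *m A = 0.
Proof.
move=> hd.
have hK : kermx A != 0.
  rewrite -mxrank_eq0 mxrank_ker; have := rank_leq_col A.
  by apply: contraL => /eqP; lia.
have [i hi] : exists i, row i (kermx A) != 0.
  apply/existsP; move: hK; apply: contraR; rewrite negb_exists => /forallP H.
  apply/eqP/row_matrixP => i; rewrite row0; exact/eqP/negPn/H.
exists (row i (kermx A)); split => //; apply/sub_kermxP; exact: row_sub.
Qed.

Section Gen.
Variables (k : fieldType) (N d : nat) (g : 'I_d -> {mpoly k[N]}).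
Definition Gen (F : {mpoly k[N]}) := exists Q : {mpoly k[d]}, F = mmap (@mpolyC N k) g Q.
Lemma Gen0 : Gen 0. Proof. by exists 0; rewrite mmap0. Qed.
Lemma Gen1 : Gen 1. Proof. by exists 1; rewrite rmorph1. Qed.
Lemma GenD F G : Gen F -> Gen G -> Gen (F + G).
Proof. by move=> [Q1 ->] [Q2 ->]; exists (Q1 + Q2); rewrite mmapD. Qed.
Lemma GenM F G : Gen F -> Gen G -> Gen (F * G).
Proof. by move=> [Q1 ->] [Q2 ->]; exists (Q1 * Q2); rewrite rmorphM. Qed.
Lemma GenZ a F : Gen F -> Gen (a *: F).
Proof. by move=> [Q1 ->]; exists (a *: Q1); rewrite mmapZ mul_mpolyC. Qed.
Lemma Gen_all : (forall i, Gen 'X_i) -> forall F, Gen F.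
Proof.
move=> hX F; rewrite (mpolyE F); apply: (big_ind Gen); [exact: Gen0|exact: GenD|].
move=> m _; apply: GenZ; rewrite -mmap1_id /mmap1.
apply: (big_ind Gen); [exact: Gen1|exact: GenM|].
move=> i _; elim: (m i) => [|t IH]; first by rewrite expr0; exact: Gen1.
by rewrite exprS; apply: GenM.
Qed.
End Gen.

Lemma upper (k : fieldType) n m (r : 'I_m -> {mpoly k[n.+3]}) :
  quot_alg_generated_by r (n + 3).
Proof.
exists (fun i => 'X_(cast_ord (addn3 n) i)) => F.
have [|Q ->] := @Gen_all k n.+3 (n + 3) (fun i => 'X_(cast_ord (addn3 n) i)) _ F.
  move=> i; exists 'X_(cast_ord (esym (addn3 n)) i).
  by rewrite mmapX mmap1U cast_ordKV.
exists Q; exists (fun _ => 0); rewrite subrr big1 // => i _; exact: mul0r.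
Qed.
Section QF.
Variables (k : fieldType) (h : {poly k}) (hI : monic_irreducible_poly h).
Definition LF : fieldType := {poly %/ h with hI}.
Definition iotaF : {rmorphism k -> LF} := qpolyC h.
Definition alphaF : LF := in_qpoly h 'X.
Lemma rootF q : h %| q -> (map_poly iotaF q).[alphaF] = 0.
Proof.
move=> hq.
have := in_qpoly_comp_horner h q 'X; rewrite comp_polyXr => <-.
case/dvdpP: hq => q' ->; rewrite in_qpolyM.
suff -> : in_qpoly h h = 0 by rewrite mulr0.
apply: val_inj => /=; rewrite (mk_monicE hI) Pdiv.RingMonic.rmodpp //; exact: hI.2.
Qed.
End QF.

Lemma irr_factor (k : fieldType) (p : {poly k}) :
  (1 < size p)%N -> exists h, monic_irreducible_poly h /\ h %| p.
Proof.
move: {2}(size p) (leqnn (size p)) => s; elim: s p => [|s IH] p hs hp.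
  by move: hs hp; case: (size p).
have p0 : p != 0 by rewrite -size_poly_gt0; apply: ltnW.
have lc0 : (lead_coef p)^-1 != 0 by rewrite invr_eq0 lead_coef_eq0.
have [H|nH] := classic (forall q : {poly k}, size q != 1%N -> q %| p -> q %= p).
  have E : (lead_coef p)^-1 *: p %= p by apply: eqp_scale.
  exists ((lead_coef p)^-1 *: p); split; last by rewrite dvdpZl.
  split; last by rewrite monicE lead_coefZ mulVf ?lead_coef_eq0.
  split; first by rewrite size_scale.
  move=> q q1; rewrite (eqp_dvdr _ E) => qp.
  by apply: eqp_trans (H q q1 qp) _; rewrite eqp_sym.
have [q nq] := not_all_ex_not _ _ nH.
have q1 : size q != 1%N by apply/negP => /eqP e; apply: nq; rewrite e.
have qp : q %| p by apply/negP => /negP e; apply: nq => _; rewrite (negbTE e).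
have nqp : ~ q %= p by move=> e; apply: nq.
have q0 : q != 0 by apply: contra_neq p0 => e; move: qp; rewrite e dvd0p => /eqP.
have hq1 : (1 < size q)%N.
  by move: q1; rewrite -size_poly_gt0 in q0; case: (size q) q0 => [|[|]].
have hqs : (size q < size p)%N.
  rewrite ltn_neqAle dvdp_leq // andbT dvdp_size_eqp //; exact/negP.
have [h [hI hh]] := IH q ltac:(lia) hq1.
by exists h; split => //; apply: dvdp_trans hh qp.
Qed.

Theorem proposition4p3 (k : fieldType) (n : nat) (p : nat -> {poly k})
    (u v : nat -> k) (a b : nat -> nat) :
  (1 <= n)%N ->
  (forall i, (1 <= i <= n)%N -> u i != 0) ->
  (forall i, (1 <= i <= n)%N -> v i != 0) ->
  (forall i, (1 <= i <= n)%N -> p i != 0) ->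
  (forall i j, (1 <= i <= n)%N -> (1 <= j <= n)%N ->
     same_prime_factors (p i) (p j)) ->
  (forall i, (1 <= i <= n)%N -> (0 < a i)%N /\ (0 < b i)%N) ->
  (forall i, (1 <= i <= n)%N -> coprime (a i) (\prod_(1 <= j < i.+1) b j)) ->
  (forall i, (1 <= i <= n)%N -> (1 < size (p i))%N) ->
  (forall i, (1 <= i <= n)%N -> (2 <= a i)%N /\ (2 <= b i)%N) ->
  quot_embdim_eq (@Brel k n p u v a b) (n + 3).
Proof.
move=> hn hu hv hp hsame hab hcop hsize hab2.
split; first exact: upper.
move=> d [g hg]; rewrite leqNgt; apply/negP => hd.
have hn1 : (1 <= 1 <= n)%N by rewrite leqnn hn.
have [h [hI hdiv1]] := irr_factor (hsize 1%N hn1).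
have hdiv : forall i, (1 <= i <= n)%N -> h %| p i.
  by move=> i hi; rewrite -(hsame 1%N i hn1 hi h hI.1).
pose L := LF hI; pose iota := iotaF hI.
pose pt := fun e : 'I_n.+3 => if e == varx n then alphaF hI else 0.
pose A : 'M[L]_(n.+3, d) := \matrix_(e, j) phi iota pt ((g j)^`M(e)).
have [cr [cr0 hcr]] := exists_kernel A ltac:(lia).
pose c := fun e => cr 0 e.
have hgj : forall j, Dc iota pt c (g j) = 0.
  move=> j; have := congr1 (fun M : 'M[L]_(1,d) => M 0 j) hcr; rewrite !mxE => <-.
  by apply: eq_bigr => e _; rewrite mxE.
have hphiZ : forall m, (m <= n.+1)%N -> phi iota pt 'X_(varz n m) = 0.
  move=> m hm; rewrite phiX /pt.
  have -> : (varz n m == varx n) = false => //.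
  by apply/negbTE; rewrite /varz /varx -val_eqE /= inordK.
have hphiP : forall i, (1 <= i <= n)%N -> phi iota pt (liftx n (p i)) = 0.
  move=> i hi; rewrite /liftx phi_liftP phiX /pt eqxx; exact: rootF (hdiv i hi).
have hrel1 : forall i, phi iota pt (@Brel k n p u v a b i) = 0.
  move=> i; have hi : (1 <= i.+1 <= n)%N by rewrite ltn0Sn /= ltn_ord.
  have [ha hb] := hab2 _ hi.
  rewrite /Brel !phiD phiM !phiZ hphiP // hphiZ ?phi_pow ?hphiZ //; try lia.
  by rewrite !mulr0 !addr0.
have hrel2 : forall i, Dc iota pt c (@Brel k n p u v a b i) = 0.
  move=> i; have hi : (1 <= i.+1 <= n)%N by rewrite ltn0Sn /= ltn_ord.
  have [ha hb] := hab2 _ hi.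
  rewrite /Brel !DcD DcM !DcZ hphiP // hphiZ ?Dc_pow ?hphiZ //; try lia.
  by rewrite !mul0r !mulr0 !addr0.
apply: (negP cr0); apply/eqP/rowP => e; rewrite !mxE.
have [Q HQ] := hg 'X_e.
have := Dc_ideal hrel1 hrel2 HQ.
by rewrite DcD DcN DcX Dc_mmap // subr0.
Qed.
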